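(* Regard $\phi_0(a,\beta_0,r,\mu)=1-\dfrac{(a\beta_0-\sqrt r)^2}{a\mu+r}$ as a smooth function of positive parameters $a,\beta_0,r,\mu$. For every parameter value $(A,r,\beta_0,a,\mu)\in(0,\infty)^5$ satisfying $$a\beta_0<\sqrt r,\qquad \phi_0<\frac{\beta_0A}{\mu+\frac ra}<1,\qquad \beta_0<1,$$ one has $$\frac{\partial\phi_0}{\partial a}>0,\qquad \frac{\partial\phi_0}{\partial \beta_0}>0,\qquad \frac{\partial\phi_0}{\partial \mu}>0,\qquad \frac{\partial\phi_0}{\partial r}<0.$$ *)

(* Defs.v *)
From Stdlib Require Import Reals Lra.
From Coquelicot Require Import Coquelicot.
Open Scope R_scope.

Definition phi0 (a beta0 r mu : R) : R :=
  1 - (a * beta0 - sqrt r) ^ 2 / (a * mu + r).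

(* Main.v *)
Require Import Defs.
From Stdlib Require Import Reals Lra.
From Coquelicot Require Import Coquelicot.
Open Scope R_scope.

Lemma Dpos (f : R -> R) x l : is_derive f x l /\ 0 < l -> 0 < Derive f x.
Proof. intros [H1 H2]. rewrite (is_derive_unique _ _ _ H1). exact H2. Qed.
Lemma Dneg (f : R -> R) x l : is_derive f x l /\ l < 0 -> Derive f x < 0.
Proof. intros [H1 H2]. rewrite (is_derive_unique _ _ _ H1). exact H2. Qed.

Theorem lemma5p5 (A r beta0 a mu : R)
  (hA : 0 < A) (hr : 0 < r) (hb : 0 < beta0) (ha : 0 < a) (hmu : 0 < mu)
  (h1 : a * beta0 < sqrt r)
  (h2 : phi0 a beta0 r mu < beta0 * A / (mu + r / a))
  (h3 : beta0 * A / (mu + r / a) < 1)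
  (h4 : beta0 < 1) :
  Derive (fun x => phi0 x beta0 r mu) a > 0 /\
  Derive (fun x => phi0 a x r mu) beta0 > 0 /\
  Derive (fun x => phi0 a beta0 r x) mu > 0 /\
  Derive (fun x => phi0 a beta0 x mu) r < 0.
Proof.
  unfold phi0.
  set (s := sqrt r) in *.
  assert (hs : 0 < s) by (apply sqrt_lt_R0; lra).
  assert (hss : s * s = r) by (apply sqrt_sqrt; lra).
  assert (hD : 0 < a * mu + r) by nra.
  assert (hD0 : a * mu + r <> 0) by lra.
  assert (hs0 : s <> 0) by lra.
  assert (hN : 0 < (a * beta0 - s) ^ 2).
  { replace ((a * beta0 - s) ^ 2) with ((s - a * beta0) ^ 2) by ring. apply pow_lt; lra. }
  assert (hD2 : 0 < (a * mu + r) ^ 2) by (apply pow_lt; lra).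
  repeat split.
  - apply Rlt_gt, (Dpos (fun x => 1 - (x * beta0 - s) ^ 2 / (x * mu + r)) a
      (- (2 * beta0 * (a * beta0 - s) * (a * mu + r) - (a * beta0 - s) ^ 2 * mu) / (a * mu + r) ^ 2)).
    assert (H : is_derive (fun x => 1 - (x * beta0 - s) ^ 2 / (x * mu + r)) a
      (- (2 * beta0 * (a * beta0 - s) * (a * mu + r) - (a * beta0 - s) ^ 2 * mu) / (a * mu + r) ^ 2)).
    { auto_derive. lra. field. lra. }
    split; [exact H|].
    apply Rdiv_lt_0_compat; [|lra].
    assert (0 < (a * beta0 - s) ^ 2 * mu) by (apply Rmult_lt_0_compat; lra).
    assert (2 * beta0 * (a * beta0 - s) * (a * mu + r) < 0).
    { assert (0 < 2 * beta0 * (s - a * beta0) * (a * mu + r)).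
      { repeat apply Rmult_lt_0_compat; lra. } nra. }
    lra.
  - apply Rlt_gt, (Dpos (fun x => 1 - (a * x - s) ^ 2 / (a * mu + r)) beta0
      (- (2 * a * (a * beta0 - s)) / (a * mu + r))).
    assert (H : is_derive (fun x => 1 - (a * x - s) ^ 2 / (a * mu + r)) beta0
      (- (2 * a * (a * beta0 - s)) / (a * mu + r))).
    { auto_derive. lra. field. lra. }
    split; [exact H|].
    apply Rdiv_lt_0_compat; [|lra].
    assert (0 < 2 * a * (s - a * beta0)) by (repeat apply Rmult_lt_0_compat; lra).
    lra.
  - apply Rlt_gt, (Dpos (fun x => 1 - (a * beta0 - s) ^ 2 / (a * x + r)) mu
      ((a * beta0 - s) ^ 2 * a / (a * mu + r) ^ 2)).
    assert (H : is_derive (fun x => 1 - (a * beta0 - s) ^ 2 / (a * x + r)) mu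
      ((a * beta0 - s) ^ 2 * a / (a * mu + r) ^ 2)).
    { auto_derive. lra. field. lra. }
    split; [exact H|].
    apply Rdiv_lt_0_compat; [|lra].
    apply Rmult_lt_0_compat; lra.
  - apply (Dneg (fun x => 1 - (a * beta0 - sqrt x) ^ 2 / (a * mu + x)) r
      (- ((s - a * beta0) / s * (a * mu + r) - (a * beta0 - s) ^ 2) / (a * mu + r) ^ 2)).
    assert (H : is_derive (fun x => 1 - (a * beta0 - sqrt x) ^ 2 / (a * mu + x)) r
      (- ((s - a * beta0) / s * (a * mu + r) - (a * beta0 - s) ^ 2) / (a * mu + r) ^ 2)).
    { auto_derive. split; [lra|split;[lra|exact I]]. fold s. field. lra. }
    split; [exact H|].
    assert (hpos : 0 < (s - a * beta0) / s * (a * mu + r) - (a * beta0 - s) ^ 2).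
    { replace ((s - a * beta0) / s * (a * mu + r) - (a * beta0 - s) ^ 2)
        with ((s - a * beta0) * (a * mu + a * beta0 * s) / s)
        by (rewrite <- hss; field; lra).
      apply Rdiv_lt_0_compat; [|lra]. apply Rmult_lt_0_compat; [lra|]. assert (0 < a * mu) by (apply Rmult_lt_0_compat; lra). assert (0 < a * beta0 * s) by (repeat apply Rmult_lt_0_compat; lra). lra. }
    assert (0 < (a * mu + r) ^ 2) by nra.
    unfold Rdiv at 1. rewrite Ropp_mult_distr_l_reverse.
    assert (0 < / (a * mu + r) ^ 2) by (apply Rinv_0_lt_compat; lra). nra.
Qed.
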